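(* Let $T$ be a finite rooted tree with root $v_0$ and leaves identified with classes $1,\dots,K$; identify each non-root node $v_j$ with the set of classes in its subtree, let $p(j)$ be the parent of $v_j$, $d(j)$ its depth, and $a(y)$ the set of non-root nodes on the path from leaf $y$ to the root (including the leaf). Fix $\alpha>0$ and define, for a probability vector $f=(f_1,\dots,f_K)$ with positive entries and label $y$, the hierarchical cross-entropy $$\mathcal L_{\mathrm{HXE}}(f,y)=-\sum_{j\in a(y)} e^{-\alpha d(j)}\log\Big(\frac{\sum_{k\in v_j} f_k}{\sum_{k\in v_{p(j)}} f_k}\Big).$$ Then $\mathcal L_{\mathrm{HXE}}$ can be written in the form $-\sum_{j\in a(y)} w_j\log\big(\sum_{k\in v_j} f_k\big)$ with weights $w_j>0$ on non-root nodes forming a balanced weighted tree (i.e. $\sum_{j\in a(k)} w_j$ is the same for all classes $k$), and consequently $\mathcal L_{\mathrm{HXE}}$ is a proper scoring rule.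
   Context: Proper scoring rule: a loss $\mathcal L(f,y)$ on probability vectors over $K$ classes is proper if, for every label distribution $\pi$, $\sum_k\pi_k\mathcal L(f,k)$ is minimized over the simplex at $f=\pi$. *)

(* Defs.v *)
From HB Require Import structures.
From mathcomp Require Import all_boot all_order all_algebra.
From mathcomp Require Import all_classical all_reals all_analysis.
Set Implicit Arguments. Unset Strict Implicit. Unset Printing Implicit Defensive.
Import Order.TTheory GRing.Theory Num.Theory.
Local Open Scope ring_scope.

Definition is_rooted_tree (V : finType) (r : V) (par : V -> V) : Prop :=
  par r = r /\
  (forall v : V, exists n, iter n par v = r).

(* u is an ancestor of v (or v itself): u is reached from v by parent steps.
   In a tree the path to the root has fewer than #|V| steps. *)
Definition anc (V : finType) (par : V -> V) (u v : V) : bool :=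
  has (fun n => iter n par v == u) (iota 0 #|V|).

Definition depth (V : finType) (r : V) (par : V -> V) (v : V) : nat :=
  find (fun n => iter n par v == r) (iota 0 #|V|).

Definition is_leaf (V : finType) (r : V) (par : V -> V) (v : V) : bool :=
  ~~ [exists u, (u != r) && (par u == v)].

Definition leaves_are_classes (V : finType) (r : V) (par : V -> V) (K : nat)
  (leaf : 'I_K -> V) : Prop :=
  injective leaf /\ (forall v, is_leaf r par v <-> exists k, leaf k = v).

Definition cls (V : finType) (par : V -> V) (K : nat) (leaf : 'I_K -> V)
  (v : V) : {set 'I_K} := [set k | anc par v (leaf k)].

Definition apath (V : finType) (r : V) (par : V -> V) (K : nat)
  (leaf : 'I_K -> V) (y : 'I_K) : {set V} :=
  [set j | (j != r) && anc par j (leaf y)].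

Definition node_mass (R : realType) (V : finType) (par : V -> V) (K : nat)
  (leaf : 'I_K -> V) (f : 'I_K -> R) (v : V) : R :=
  \sum_(k in cls par leaf v) f k.

Definition L_HXE (R : realType) (V : finType) (r : V) (par : V -> V) (K : nat)
  (leaf : 'I_K -> V) (alpha : R) (f : 'I_K -> R) (y : 'I_K) : R :=
  - \sum_(j in apath r par leaf y)
      expR (- (alpha * (depth r par j)%:R)) *
      ln (node_mass par leaf f j / node_mass par leaf f (par j)).

Definition prob_vec (R : realType) (K : nat) (p : 'I_K -> R) : Prop :=
  (forall k, 0 <= p k) /\ \sum_k p k = 1.

Definition pos_prob_vec (R : realType) (K : nat) (p : 'I_K -> R) : Prop :=
  (forall k, 0 < p k) /\ \sum_k p k = 1.

Definition proper_scoring_rule (R : realType) (K : nat) (L : ('I_K -> R) -> 'I_K -> R) : Prop :=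
  forall pi : 'I_K -> R, prob_vec pi ->
  forall f : 'I_K -> R, pos_prob_vec f ->
    \sum_k pi k * L pi k <= \sum_k pi k * L f k.

(* Main.v *)
Require Import Defs.
From HB Require Import structures.
From mathcomp Require Import all_boot all_order all_algebra.
From mathcomp Require Import all_classical all_reals all_analysis.
From mathcomp Require Import zify ring lra.
Import Order.TTheory GRing.Theory Num.Theory.
Local Open Scope ring_scope.
Set Implicit Arguments. Unset Strict Implicit.

Lemma iter_root (V : Type) (r : V) (par : V -> V) n :
  par r = r -> iter n par r = r.
Proof. by move=> pr; elim: n => //= n ->. Qed.

Lemma reach_small (V : finType) (r : V) (par : V -> V) v :
  is_rooted_tree r par -> exists2 n, (n < #|V|)%N & iter n par v = r.
Proof.
case=> pr /(_ v) ex.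
have exP : exists n, iter n par v == r by case: ex => n /eqP; exists n.
case: (ex_minnP exP) => n /eqP Hn Hmin.
exists n => //.
have neq : forall i j, (i < j)%N -> (j <= n)%N -> iter i par v <> iter j par v.
  move=> i j lt hj Eij.
  have : iter (n - j + i) par v == r.
    by rewrite iterD Eij -iterD subnK // Hn.
  move/Hmin; rewrite leqNgt => /negP; apply.
  lia.
have inj : injective (fun i : 'I_n.+1 => iter i par v).
  move=> i j /= Eij; apply/val_inj => /=.
  have hi : (i <= n)%N by rewrite -ltnS ltn_ord.
  have hj : (j <= n)%N by rewrite -ltnS ltn_ord.
  case: (ltngtP i j) => // h.
  - by case: (neq _ _ h hj Eij).
  - by case: (neq _ _ h hi (esym Eij)).
by have := leq_card _ inj; rewrite card_ord.
Qed.
Lemma depthP (V : finType) (r : V) (par : V -> V) v :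
  is_rooted_tree r par ->
  [/\ iter (depth r par v) par v = r, (depth r par v < #|V|)%N &
      forall i, (i < depth r par v)%N -> iter i par v != r].
Proof.
move=> Ht; case: (reach_small v Ht) => n ltn Hn.
have hs : has (fun n => iter n par v == r) (iota 0 #|V|).
  by apply/hasP; exists n; [rewrite mem_iota | apply/eqP].
have lt : (depth r par v < #|V|)%N by move: hs; rewrite has_find size_iota.
split => //.
- have := nth_find 0 hs; rewrite -/(depth r par v) nth_iota // add0n.
  by move/eqP.
- move=> i hi; have := before_find 0 hi; rewrite nth_iota ?add0n ?(ltn_trans hi) //.
  by move=> ->.
Qed.

Lemma depth_uniq (V : finType) (r : V) (par : V -> V) v n :
  is_rooted_tree r par -> iter n par v = r ->
  (forall i, (i < n)%N -> iter i par v != r) -> depth r par v = n.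
Proof.
move=> Ht Hn Hb; case: (depthP v Ht) => Hd _ Hbd.
case: (ltngtP (depth r par v) n) => // h.
- by have := Hb _ h; rewrite Hd eqxx.
- by have := Hbd _ h; rewrite Hn eqxx.
Qed.

Lemma iter_ge_depth (V : finType) (r : V) (par : V -> V) v n :
  is_rooted_tree r par -> (depth r par v <= n)%N -> iter n par v = r.
Proof.
move=> Ht h; case: (depthP v Ht) => Hd _ _.
by rewrite -(subnK h) iterD Hd iter_root //; case: Ht.
Qed.

Lemma iter_ne_r (V : finType) (r : V) (par : V -> V) v n :
  is_rooted_tree r par -> iter n par v != r -> (n < depth r par v)%N.
Proof.
move=> Ht; rewrite ltnNge; apply: contra => h.
by rewrite (iter_ge_depth Ht h).
Qed.

Lemma depth_par (V : finType) (r : V) (par : V -> V) v :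
  is_rooted_tree r par -> v != r -> depth r par v = (depth r par (par v)).+1.
Proof.
move=> Ht vr; case: (depthP v Ht) => Hd _ Hb.
have : (0 < depth r par v)%N by apply: (iter_ne_r (n:=0) Ht).
case E: (depth r par v) => [//|m] _.
rewrite (@depth_uniq _ r par (par v) m Ht) //.
- by rewrite -iterSr -E.
- by move=> i hi; rewrite -iterSr; apply: Hb; rewrite E.
Qed.

Lemma depth_iter (V : finType) (r : V) (par : V -> V) n v :
  is_rooted_tree r par -> iter n par v != r ->
  depth r par v = (n + depth r par (iter n par v))%N.
Proof.
move=> Ht; elim: n v => // n IH v.
rewrite iterSr => h.
have vr : v != r.
  by case: (Ht) => pr _; apply: contraNneq h => ->; rewrite pr iter_root.
by rewrite (depth_par Ht vr) (IH _ h) addSn.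
Qed.

Lemma ancP (V : finType) (r : V) (par : V -> V) u v :
  is_rooted_tree r par ->
  reflect (exists2 n, (n <= depth r par v)%N & iter n par v = u) (anc par u v).
Proof.
move=> Ht; case: (depthP v Ht) => Hd lt _.
apply: (iffP hasP).
- case=> n; rewrite mem_iota add0n => /andP[_ hn] /eqP E.
  case: (leqP n (depth r par v)) => h; first by exists n.
  exists (depth r par v) => //; rewrite Hd -E (iter_ge_depth Ht) //.
  exact: ltnW.
- case=> n hn E; exists n; last by apply/eqP.
  by rewrite mem_iota add0n (leq_ltn_trans hn lt).
Qed.

Lemma apath_imset (V : finType) (r : V) (par : V -> V) K (leaf : 'I_K -> V) y :
  is_rooted_tree r par ->
  apath r par leaf y =
  [set (fun i : 'I_(depth r par (leaf y)) => iter i par (leaf y)) x | x in [set: 'I_(depth r par (leaf y))]].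
Proof.
move=> Ht; apply/setP => j; rewrite !inE.
apply/idP/imsetP.
- case/andP=> jr /(ancP _ _ Ht) [n hn E].
  have hn' : (n < depth r par (leaf y))%N.
    by apply: (iter_ne_r Ht); rewrite E.
  by exists (Ordinal hn') => //; rewrite inE.
- case=> i _ ->; have := depthP (leaf y) Ht => -[_ _ Hb].
  rewrite Hb //=; apply/(ancP _ _ Ht); exists i => //.
  exact: ltnW.
Qed.

Lemma iter_inj (V : finType) (r : V) (par : V -> V) v a b :
  is_rooted_tree r par -> (a < depth r par v)%N -> (b < depth r par v)%N ->
  iter a par v = iter b par v -> a = b.
Proof.
move=> Ht ha hb E.
have := depthP v Ht => -[_ _ Hb].
have h1 := depth_iter Ht (Hb _ ha).
have h2 := depth_iter Ht (Hb _ hb).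
move: h1 h2; rewrite E => ->; lia.
Qed.

Lemma apath_sum (R : realType) (V : finType) (r : V) (par : V -> V) K (leaf : 'I_K -> V) y
  (F : V -> R) :
  is_rooted_tree r par ->
  \sum_(j in apath r par leaf y) F j =
  \sum_(i < depth r par (leaf y)) F (iter i par (leaf y)).
Proof.
move=> Ht; rewrite (apath_imset _ _ Ht) big_imset.
  by apply: eq_bigl => i; rewrite inE.
move=> i j _ _ /= E; apply/val_inj => /=.
exact: (iter_inj Ht (ltn_ord i) (ltn_ord j) E).
Qed.

Lemma tele (R : realType) (c G : nat -> R) n :
  \sum_(i < n.+1) c i * (G i - G i.+1) =
  c 0%N * G 0%N + \sum_(i < n) (c i.+1 - c i) * G i.+1 - c n * G n.+1.
Proof.
elim: n => [|n IH].
  by rewrite big_ord1 big_ord0 addr0 mulrBr.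
rewrite big_ord_recr /= IH big_ord_recr /=.
rewrite !mulrBr !mulrBl; ring.
Qed.

Definition cw (R : realType) (V : finType) (r : V) (par : V -> V) (alpha : R) (j : V) : R :=
  expR (- (alpha * (depth r par j)%:R)).

Definition wt (R : realType) (V : finType) (r : V) (par : V -> V) (alpha : R) (j : V) : R :=
  if is_leaf r par j then cw r par alpha j else cw r par alpha j * (1 - expR (- alpha)).

Lemma cw_par (R : realType) (V : finType) (r : V) (par : V -> V) (alpha : R) j :
  is_rooted_tree r par -> j != r ->
  cw r par alpha j = cw r par alpha (par j) * expR (- alpha).
Proof.
move=> Ht jr; rewrite /cw (depth_par Ht jr) -natr1 mulrDr mulr1 opprD expRD.
by [].
Qed.

Lemma leaf_leaf (V : finType) (r : V) (par : V -> V) K (leaf : 'I_K -> V) y :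
  leaves_are_classes r par leaf -> is_leaf r par (leaf y).
Proof. by case=> _ /(_ (leaf y)) [_ ->]; [|exists y]. Qed.

Lemma path_sum (R : realType) (V : finType) (r : V) (par : V -> V) K (leaf : 'I_K -> V)
  (alpha : R) y (g : V -> R) :
  is_rooted_tree r par -> leaves_are_classes r par leaf ->
  (0 < depth r par (leaf y))%N ->
  \sum_(j in apath r par leaf y) cw r par alpha j * (g j - g (par j)) =
  \sum_(j in apath r par leaf y) wt r par alpha j * g j - expR (- alpha) * g r.
Proof.
move=> Ht Hl.
rewrite !(apath_sum _ _ _ Ht).
have := depthP (leaf y) Ht => -[Hd _ Hb].
case E: (depth r par (leaf y)) => [//|n] _.
under eq_bigr do rewrite -iterS.
rewrite (tele (fun i => cw r par alpha (iter i par (leaf y)))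
              (fun i => g (iter i par (leaf y)))).
rewrite big_ord_recl /=.
have Hn : iter n par (leaf y) != r by apply: Hb; rewrite E.
have -> : par (iter n par (leaf y)) = r by rewrite -iterS -E.
have -> : cw r par alpha (iter n par (leaf y)) = expR (- alpha).
  rewrite /cw; have := depth_iter Ht Hn; rewrite E.
  by move/eqP; rewrite -{1}(addn1 n) eqn_add2l => /eqP <-; rewrite mulr1.
congr (_ + _ - _).
  by rewrite /wt (leaf_leaf _ Hl).
apply: eq_bigr => i _.
rewrite add0n.
have Hi : iter i par (leaf y) != r by apply: Hb; rewrite E ltnS ltnW.
have Hnl : is_leaf r par (par (iter i par (leaf y))) = false.
  apply/negbTE/negPn/existsP; exists (iter i par (leaf y)).
  by rewrite Hi eqxx.
rewrite /wt Hnl (cw_par _ Ht Hi); ring.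
Qed.

Lemma ln_ineq (R : realType) (a b : R) :
  0 < a -> 0 < b -> ln a * b - ln b * b <= a - b.
Proof.
move=> a0 b0.
have hab : 0 < a / b by rewrite divr_gt0.
have h : ln (1 + (a / b - 1)) <= a / b - 1.
  by apply: le_ln1Dx; rewrite ltrBrDl subrr.
have e1 : 1 + (a / b - 1) = a / b by rewrite addrC subrK.
rewrite e1 lnM ?posrE ?invr_gt0 // lnV ?posrE // in h.
have := ler_wpM2r (ltW b0) h.
have -> : (a / b - 1) * b = a - b.
  by rewrite mulrBl mul1r divfK // gt_eqF.
by rewrite mulrBl.
Qed.

Lemma mass_pos (R : realType) (V : finType) (par : V -> V) K (leaf : 'I_K -> V)
  (f : 'I_K -> R) y j :
  (forall k, 0 <= f k) -> 0 < f y -> anc par j (leaf y) -> 0 < node_mass par leaf f j.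
Proof.
move=> f0 fy hj; rewrite /node_mass (bigD1 y) ?inE //=.
by apply: (lt_le_trans fy); rewrite lerDl sumr_ge0.
Qed.

Lemma mass_ge0 (R : realType) (V : finType) (par : V -> V) K (leaf : 'I_K -> V)
  (f : 'I_K -> R) j :
  (forall k, 0 <= f k) -> 0 <= node_mass par leaf f j.
Proof. by move=> f0; rewrite /node_mass sumr_ge0. Qed.

Lemma mass_root (R : realType) (V : finType) (r : V) (par : V -> V) K (leaf : 'I_K -> V)
  (f : 'I_K -> R) :
  is_rooted_tree r par -> node_mass par leaf f r = \sum_k f k.
Proof.
move=> Ht; rewrite /node_mass; apply: eq_bigl => k; rewrite inE.
apply/(ancP _ _ Ht); exists (depth r par (leaf k)) => //.
by case: (depthP (leaf k) Ht).
Qed.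

Lemma anc_par (V : finType) (r : V) (par : V -> V) j v :
  is_rooted_tree r par -> j != r -> anc par j v -> anc par (par j) v.
Proof.
move=> Ht jr /(ancP _ _ Ht) [n hn E]; apply/(ancP _ _ Ht).
exists n.+1; last by rewrite iterS E.
rewrite ltn_neqAle hn andbT; apply: contra jr => /eqP En.
by rewrite -E En; case: (depthP v Ht) => ->.
Qed.

Lemma identity (R : realType) (V : finType) (r : V) (par : V -> V) K (leaf : 'I_K -> V)
  (alpha : R) (f : 'I_K -> R) y :
  is_rooted_tree r par -> leaves_are_classes r par leaf ->
  (forall k, 0 <= f k) -> 0 < f y -> \sum_k f k = 1 ->
  L_HXE r par leaf alpha f y =
  - \sum_(j in apath r par leaf y) wt r par alpha j * ln (node_mass par leaf f j).
Proof.
move=> Ht Hl f0 fy f1.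
case: (posnP (depth r par (leaf y))) => D0.
  rewrite /L_HXE !(apath_sum _ _ _ Ht).
  by move: (depth r par (leaf y)) D0 => d ->; rewrite !big_ord0.
rewrite /L_HXE.
have -> : \sum_(j in apath r par leaf y)
      expR (- (alpha * (depth r par j)%:R)) *
      ln (node_mass par leaf f j / node_mass par leaf f (par j)) =
   \sum_(j in apath r par leaf y) cw r par alpha j *
      ((fun j => ln (node_mass par leaf f j)) j - (fun j => ln (node_mass par leaf f j)) (par j)).
  apply: eq_bigr => j; rewrite inE => /andP[jr hj] /=.
  have m1 := mass_pos f0 fy hj.
  have m2 := mass_pos f0 fy (anc_par Ht jr hj).
  rewrite /cw lnM ?posrE ?invr_gt0 // lnV ?posrE //.
rewrite (path_sum alpha (fun j => ln (node_mass par leaf f j)) Ht Hl D0) /= mass_root // f1 ln1 mulr0 subr0.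
by [].
Qed.

Lemma swap (R : realType) (V : finType) (r : V) (par : V -> V) K (leaf : 'I_K -> V)
  (g : 'I_K -> R) (F : V -> R) :
  \sum_k g k * \sum_(j in apath r par leaf k) F j =
  \sum_(j | j != r) F j * node_mass par leaf g j.
Proof.
under eq_bigr do rewrite big_distrr big_mkcond /=.
rewrite exchange_big /= [RHS]big_mkcond /=.
apply: eq_bigr => j _.
case: (boolP (j != r)) => jr.
  rewrite /node_mass big_distrr /= [RHS]big_mkcond /=.
  apply: eq_bigr => k _; rewrite !inE jr /=.
  by case: (anc par j (leaf k)) => //; rewrite mulrC.
by apply: big1 => k _; rewrite inE (negbTE jr).
Qed.

Lemma balance (R : realType) (V : finType) (r : V) (par : V -> V) K (leaf : 'I_K -> V)
  (alpha : R) y :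
  is_rooted_tree r par -> leaves_are_classes r par leaf ->
  \sum_(j in apath r par leaf y) wt r par alpha j =
  (if is_leaf r par r then 0 else expR (- alpha)).
Proof.
move=> Ht Hl.
have := depthP (leaf y) Ht => -[Hd _ Hb].
case: (posnP (depth r par (leaf y))) => D0.
  have Lr : leaf y = r by rewrite -Hd D0.
  have -> : is_leaf r par r by rewrite -{2}Lr; apply: leaf_leaf.
  rewrite (apath_sum _ _ _ Ht).
  by move: (depth r par (leaf y)) D0 => d ->; rewrite big_ord0.
have := path_sum alpha (fun _ => 1) Ht Hl D0.
rewrite /= big1; last by move=> j _; rewrite subrr mulr0.
move/eqP; rewrite eq_sym subr_eq0 mulr1 => /eqP Es.
have -> : \sum_(j in apath r par leaf y) wt r par alpha j =
  \sum_(j in apath r par leaf y) wt r par alpha j * 1 by apply: eq_bigr => j _; rewrite mulr1.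
rewrite Es.
case E: (depth r par (leaf y)) D0 => [//|n] _.
have Hn : iter n par (leaf y) != r by apply: Hb; rewrite E.
suff -> : is_leaf r par r = false by [].
apply/negbTE/negPn/existsP; exists (iter n par (leaf y)).
by rewrite Hn -iterS -E Hd eqxx.
Qed.

Theorem proposition4 (R : realType) (K : nat) (V : finType) (r : V)
  (par : V -> V) (leaf : 'I_K -> V) (alpha : R) :
  is_rooted_tree r par -> leaves_are_classes r par leaf -> 0 < alpha ->
  (exists w : V -> R,
     (forall j, j != r -> 0 < w j) /\
     (exists c : R, forall k : 'I_K, \sum_(j in apath r par leaf k) w j = c) /\
     (forall f : 'I_K -> R, pos_prob_vec f -> forall y : 'I_K,
        L_HXE r par leaf alpha f y =
        - \sum_(j in apath r par leaf y) w j * ln (node_mass par leaf f j)))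
  /\ proper_scoring_rule (L_HXE r par leaf alpha).
Proof.
move=> Ht Hl a0.
have wpos : forall j, 0 < wt r par alpha j.
  move=> j; rewrite /wt /cw; case: ifP => _; first exact: expR_gt0.
  by rewrite mulr_gt0 ?expR_gt0 // subr_gt0 expR_lt1 oppr_lt0.
split.
  exists (wt r par alpha); split; first by move=> j _; apply: wpos.
  split; first by eexists => k; apply: balance.
  move=> f [fp f1] y; apply: identity => // k; exact: ltW.
move=> pi [p0 p1] f [fp f1].
have f0 : forall k, 0 <= f k by move=> k; apply: ltW.
set c := (if is_leaf r par r then 0 else expR (- alpha)).
have Ex : forall g : 'I_K -> R, (forall k, 0 <= g k) -> \sum_k g k = 1 ->
   (forall k, 0 < pi k -> 0 < g k) ->
   \sum_k pi k * L_HXE r par leaf alpha g k =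
   - \sum_(j | j != r) (wt r par alpha j * ln (node_mass par leaf g j)) * node_mass par leaf pi j.
  move=> g g0 g1 gp.
  rewrite -swap -sumrN; apply: eq_bigr => k _.
  case: (ltgtP 0 (pi k)) => [pk||<-]; last by rewrite !mul0r oppr0.
  - by rewrite (identity alpha Ht Hl g0 (gp _ pk) g1) mulrN.
  - by rewrite ltNge p0.
have Sw : forall g : 'I_K -> R, \sum_k g k = 1 ->
   \sum_(j | j != r) wt r par alpha j * node_mass par leaf g j = c.
  move=> g g1; rewrite -swap.
  under eq_bigr do rewrite (balance _ _ Ht Hl).
  by rewrite -big_distrl /= g1 mul1r.
rewrite (Ex pi p0 p1 (fun k h => h)) (Ex f f0 f1 (fun k _ => fp k)).
rewrite lerN2 -subr_le0 -sumrB.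
apply: (@le_trans _ _ (\sum_(j | j != r) (wt r par alpha j * node_mass par leaf f j -
                                 wt r par alpha j * node_mass par leaf pi j))); last first.
  by rewrite sumrB Sw // Sw // subrr.
apply: ler_sum => j _.
rewrite -mulrBr -!mulrA -mulrBr ler_pM2l //.
have mp0 := mass_ge0 par leaf j p0.
case: (ltgtP 0 (node_mass par leaf pi j)) => [mp||<-]; last first.
- by rewrite !mulr0 subrr subr0 mass_ge0.
- by rewrite ltNge mp0.
have mf : 0 < node_mass par leaf f j.
  move: mp; rewrite /node_mass; case: (pickP (mem (cls par leaf j))) => [k hk|h].
    by move=> _; rewrite (bigD1 k) //= ltr_pwDl ?fp ?sumr_ge0.
  by rewrite big_pred0 ?ltxx.
exact: ln_ineq.
Qed.
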